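(* Let $\mathcal G$ be a network with out-degree vector $w$, $h\in\mathbb R^{\mathcal V}$, and assume $\mathcal G$ is $h$-indecomposable. Consider the coordination game on $\mathcal G$ with external field $h$. Then: (i) if $|h|\le w$, then $\mathcal X^*_h=\{\pm\mathbf 1\}$ and it is globally I-stable; (ii) if $|h|<w$, then $\mathcal X^*_h=\{\pm\mathbf 1\}$ and it is globally BR-stable; (iii) if $w\ngeq a h$ for some $a\in\{\pm1\}$, then $\mathcal X^*_h=\{a\mathbf 1\}$ and it is globally BR-stable.
   Context: A network is $\mathcal G=(\mathcal V,\mathcal E,W)$ with finite node set $\mathcal V$, links $\mathcal E\subseteq\mathcal V\times\mathcal V$, weight matrix $W\in\mathbb R_+^{\mathcal V\times\mathcal V}$ with zero diagonal, $W_{ij}>0$ iff $(i,j)\in\mathcal E$; for $\mathcal S\subseteq\mathcal V$, $w_i^{\mathcal S}=\sum_{j\in\mathcal S}W_{ij}$; $w=W\mathbf 1$. $\mathcal X=\{-1,+1\}^{\mathcal V}$. Componentwise order: $x\le y$ iff $x_i\le y_i$ for all $i$, $x<y$ iff $x_i<y_i$ for all $i$, $x\ngeq y$ iff $x_i<y_i$ for some $i$; $|h|$ is the entrywise absolute value. $h$-indecomposable: for every partition $\mathcal V=\mathcal V^+\cup\mathcal V^-$ into two disjoint nonempty sets there exist $s\in\{-,+\}$ and $i\in\mathcal V^s$ with $w_i^{\mathcal V^s}+s\,h_i<w_i^{\mathcal V^{-s}}$ ($s\,h_i$ is $\pm h_i$ according to $s$, $-s$ is the opposite sign). Coordination game with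 external field $h$: players $\mathcal V$, actions $\{\pm1\}$, utilities $u_i(x)=x_i(\sum_jW_{ij}x_j+h_i)$; equilibria $x^*$ with $x^*_i$ maximizing $u_i(\cdot,x^*_{-i})$, set $\mathcal X^*_h$. An admissible path is a sequence $x^{(0)},\dots,x^{(l)}$ ($l\ge0$) with consecutive configurations differing exactly in the action of one player $i_k$; it is an I-path if $u_{i_k}(x^{(k)})>u_{i_k}(x^{(k-1)})$ for all $k$, a BR-path if $u_{i_k}(x^{(k)})\ge u_{i_k}(x^{(k-1)})$ for all $k$. For $\alpha\in\{\mathrm I,\mathrm{BR}\}$, $\mathcal Y\subseteq\mathcal X$ is globally $\alpha$-stable if from every $x\in\mathcal X$ there is an $\alpha$-path to some element of $\mathcal Y$, and there is no $\alpha$-path from any $y\in\mathcal Y$ to any $z\notin\mathcal Y$. *)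

(* Defs.v *)
From mathcomp Require Import all_boot all_order all_algebra.
Set Implicit Arguments. Unset Strict Implicit. Unset Printing Implicit Defensive.
Import Order.TTheory GRing.Theory Num.Theory.
Local Open Scope ring_scope.

Section Game.
Variables (V : finType) (R : realFieldType).
Variables (W : V -> V -> R) (h : V -> R).

(* A network: nonnegative weights, zero diagonal; the link set is
   {(i,j) | W i j > 0}, hence determined by W. *)
Definition network := (forall i j, 0 <= W i j) /\ (forall i, W i i = 0).

Definition wS (S : {set V}) (i : V) : R := \sum_(j in S) W i j.
Definition wdeg (i : V) : R := \sum_j W i j.

(* h-indecomposability: for every partition V = V+ u V- (V+ = A, V- = ~: A)
   into disjoint nonempty sets there are s and i in V^s with
   w_i^{V^s} + s h_i < w_i^{V^{-s}}. *)
Definition h_indecomposable : Prop :=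
  forall A : {set V}, A != set0 -> ~: A != set0 ->
    (exists2 i, i \in A & wS A i + h i < wS (~: A) i) \/
    (exists2 i, i \in ~: A & wS (~: A) i - h i < wS A i).

Definition config := {ffun V -> bool}.
Definition sgn (b : bool) : R := if b then 1 else -1.
Definition cfg (x : config) (i : V) : R := sgn (x i).

Definition allc (a : bool) : config := [ffun=> a].

Definition util (i : V) (x : config) : R :=
  cfg x i * (\sum_j W i j * cfg x j + h i).

Definition upd (x : config) (i : V) (b : bool) : config :=
  [ffun j => if j == i then b else x j].

Definition is_equilibrium (x : config) : bool :=
  [forall i, forall b, util i (upd x i b) <= util i x].

Definition Xstar : {set config} := [set x | is_equilibrium x].

Definition differ_at (x y : config) (i : V) : bool :=
  (x i != y i) && [forall j, (j != i) ==> (x j == y j)].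

Definition Istep : rel config :=
  fun x y => [exists i, differ_at x y i && (util i x < util i y)].
Definition BRstep : rel config :=
  fun x y => [exists i, differ_at x y i && (util i x <= util i y)].

Definition reach (step : rel config) (x y : config) : Prop :=
  exists p : seq config, path step x p /\ last x p = y.

Definition globally_stable (step : rel config) (Y : {set config}) : Prop :=
  (forall x, exists2 y, y \in Y & reach step x y) /\
  (forall y z, y \in Y -> z \notin Y -> ~ reach step y z).

End Game.

(* Main.v *)
Require Import Defs.
From mathcomp Require Import all_boot all_order all_algebra.
From mathcomp Require Import lra.
Import Order.TTheory GRing.Theory Num.Theory.
Local Open Scope ring_scope.
Set Implicit Arguments. Unset Strict Implicit.

Definition mf (V : finType) (R : realFieldType) (W : V -> V -> R) (h : V -> R)
  (k : V) (x : config V) : R := \sum_j W k j * cfg R x j + h k.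

Lemma sgn_sq (R : realFieldType) b : sgn R b * sgn R b = 1.
Proof. by case: b; rewrite /sgn ?mulN1r ?opprK ?mulr1. Qed.

Lemma sgn_neg (R : realFieldType) b : sgn R (~~ b) = - sgn R b.
Proof. by case: b; rewrite /sgn ?opprK. Qed.

Lemma util_mf (V : finType) (R : realFieldType) (W : V -> V -> R) h k (x : config V) :
  util W h k x = sgn R (x k) * mf W h k x.
Proof. by []. Qed.

Lemma mf_upd (V : finType) (R : realFieldType) (W : V -> V -> R) h k (x : config V) b :
  network W -> mf W h k (upd x k b) = mf W h k x.
Proof.
move=> [_ W0]; rewrite /mf; congr (_ + _); apply: eq_bigr => j _.
rewrite /cfg /upd ffunE; case: eqP => [->|//]; by rewrite W0 !mul0r.
Qed.

Lemma cfg_upd (V : finType) (R : realFieldType) x (k : V) b :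
  cfg R (upd x k b) k = sgn R b.
Proof. by rewrite /cfg /upd ffunE eqxx. Qed.

Lemma upd_k (V : finType) (x : config V) (k : V) b : upd x k b k = b.
Proof. by rewrite /upd ffunE eqxx. Qed.

Lemma upd_j (V : finType) (x : config V) (k j : V) b : j != k -> upd x k b j = x j.
Proof. by rewrite /upd ffunE => /negbTE ->. Qed.

Lemma sum_bound (V : finType) (R : realFieldType) (W : V -> V -> R) k x :
  network W -> - wdeg W k <= \sum_j W k j * cfg R x j <= wdeg W k.
Proof.
move=> [W0 _]; rewrite /wdeg -sumrN; apply/andP; split; apply: ler_sum => j _;
  rewrite /cfg /sgn; case: (x j); rewrite ?mulr1 ?mulrN1 ?lexx //;
  have := W0 k j; lra.
Qed.

Lemma wdeg_ge0 (V : finType) (R : realFieldType) (W : V -> V -> R) k :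
  network W -> 0 <= wdeg W k.
Proof. by move=> [W0 _]; apply: sumr_ge0 => j _. Qed.

Lemma mf_allc (V : finType) (R : realFieldType) (W : V -> V -> R) h k a :
  mf W h k (allc V a) = sgn R a * wdeg W k + h k.
Proof.
rewrite /mf /wdeg mulr_sumr; congr (_ + _); apply: eq_bigr => j _.
by rewrite /cfg ffunE mulrC.
Qed.

Lemma mf_mono (V : finType) (R : realFieldType) (W : V -> V -> R) h k (x y : config V) :
  network W -> (forall j, x j -> y j) -> mf W h k x <= mf W h k y.
Proof.
move=> [W0 _] xy; rewrite /mf lerD2r; apply: ler_sum => j _.
apply: ler_wpM2l => //; rewrite /cfg /sgn.
by case: (x j) (xy j) => [->//|]; case: (y j) => // _; lra.
Qed.

Lemma equilP (V : finType) (R : realFieldType) (W : V -> V -> R) h (x : config V) :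
  network W ->
  reflect (forall k, 0 <= sgn R (x k) * mf W h k x) (is_equilibrium W h x).
Proof.
move=> N; apply: (iffP forallP) => [H k|H k].
  have /forallP /(_ (~~ x k)) := H k.
  rewrite !util_mf mf_upd // upd_k sgn_neg mulNr.
  set s := sgn R (x k) * _; lra.
apply/forallP => b; rewrite !util_mf mf_upd // upd_k.
have := H k; case: b; case: (x k); rewrite /sgn; lra.
Qed.

Lemma differ_upd (V : finType) (x y : config V) k :
  differ_at x y k -> y = upd x k (~~ x k).
Proof.
case/andP=> nk /forallP H; apply/ffunP => j; rewrite /upd ffunE.
case: eqP => [->|/eqP jk]; first by move: nk; case: (x k); case: (y k).
by have /implyP/(_ jk)/eqP := H j.
Qed.

Lemma differ_upd2 (V : finType) (x : config V) k :
  differ_at x (upd x k (~~ x k)) k.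
Proof.
apply/andP; split; first by rewrite upd_k; case: (x k).
by apply/forallP => j; apply/implyP => jk; rewrite upd_j.
Qed.

Lemma IstepP (V : finType) (R : realFieldType) (W : V -> V -> R) h (x y : config V) :
  network W -> Istep W h x y ->
  exists k, y = upd x k (~~ x k) /\ sgn R (x k) * mf W h k x < 0.
Proof.
move=> N /existsP [k /andP [/differ_upd -> lt]]; exists k; split => //.
move: lt; rewrite !util_mf mf_upd // upd_k sgn_neg; set s := sgn R _ * _.
rewrite mulNr -/s; lra.
Qed.

Lemma BRstepP (V : finType) (R : realFieldType) (W : V -> V -> R) h (x y : config V) :
  network W -> BRstep W h x y ->
  exists k, y = upd x k (~~ x k) /\ sgn R (x k) * mf W h k x <= 0.
Proof.
move=> N /existsP [k /andP [/differ_upd -> lt]]; exists k; split => //.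
move: lt; rewrite !util_mf mf_upd // upd_k sgn_neg; set s := sgn R _ * _.
rewrite mulNr -/s; lra.
Qed.

Lemma Istep_mk (V : finType) (R : realFieldType) (W : V -> V -> R) h (x : config V) k :
  network W -> sgn R (x k) * mf W h k x < 0 -> Istep W h x (upd x k (~~ x k)).
Proof.
move=> N lt; apply/existsP; exists k; rewrite differ_upd2 /=.
rewrite !util_mf mf_upd // upd_k sgn_neg mulNr; move: lt; set s := sgn R _ * _; lra.
Qed.

Lemma Istep_BR (V : finType) (R : realFieldType) (W : V -> V -> R) h (x y : config V) :
  Istep W h x y -> BRstep W h x y.
Proof.
move=> /existsP [k /andP [d lt]]; apply/existsP; exists k; rewrite d /=.
exact: ltW.
Qed.

Lemma reach_refl (V : finType) (s : rel (config V)) x : reach s x x.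
Proof. by exists [::]. Qed.

Lemma reach_cons (V : finType) (s : rel (config V)) x y z :
  s x y -> reach s y z -> reach s x z.
Proof. by move=> sxy [p [pp lp]]; exists (y :: p); rewrite /= sxy pp. Qed.

Lemma reach_sub (V : finType) (s t : rel (config V)) x y :
  subrel s t -> reach s x y -> reach t x y.
Proof. by move=> st [p [pp lp]]; exists p; split => //; exact: sub_path pp. Qed.

Lemma reach_stuck (V : finType) (s : rel (config V)) x y :
  (forall z, ~~ s x z) -> reach s x y -> y = x.
Proof.
move=> H [[|z p] [pp <-]] //=; move: pp => /= /andP [sxz _].
by have := H z; rewrite sxz.
Qed.

Lemma phase2 (V : finType) (R : realFieldType) (W : V -> V -> R) h :
  network W -> forall n (x : config V), (#|[set k | ~~ x k]| <= n)%N ->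
  (forall k, x k -> 0 <= mf W h k x) ->
  exists2 y, reach (Istep W h) x y & is_equilibrium W h y.
Proof.
move=> N; elim=> [|n IH] x cx inv.
- exists x; first exact: reach_refl.
  apply/(@equilP _ _ W h _ N) => k; case xk: (x k); first by rewrite /sgn mul1r inv.
  move: cx; rewrite leqn0 cards_eq0 => /eqP /setP /(_ k); rewrite !inE xk //.
case: (boolP [exists k, ~~ x k && (0 < mf W h k x)]).
- case/existsP => k /andP [xk pk].
  have st : Istep W h x (upd x k (~~ x k)).
    apply: Istep_mk => //; rewrite (negbTE xk) /sgn; lra.
  have c1 : (#|[set j | ~~ upd x k (~~ x k) j]| <= n)%N.
    rewrite -ltnS; apply: leq_trans cx; apply: proper_card.
    apply/properP; split.
      apply/subsetP => j; rewrite !inE; case: (eqVneq j k) => [->|jk].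
        by rewrite (negbTE xk).
      by rewrite upd_j.
    by exists k; rewrite !inE ?upd_k // (negbTE xk).
  have c2 : forall j, upd x k (~~ x k) j -> 0 <= mf W h j (upd x k (~~ x k)).
    move=> j; case: (eqVneq j k) => [->|jk]; first by rewrite mf_upd //; move=> _; exact: ltW.
    rewrite upd_j // => xj; apply: le_trans (inv j xj) _; apply: mf_mono => // i xi.
    case: (eqVneq i k) => [->|ik]; first by rewrite upd_k (negbTE xk).
    by rewrite upd_j.
  have [y r e] := IH _ c1 c2.
  by exists y => //; apply: reach_cons st r.
- rewrite negb_exists => /forallP H; exists x; first exact: reach_refl.
  apply/(@equilP _ _ W h _ N) => k; case xk: (x k); first by rewrite /sgn mul1r inv.
  have := H k; rewrite xk /= /sgn -leNgt => le; lra.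
Qed.

Lemma exists_eq (V : finType) (R : realFieldType) (W : V -> V -> R) h :
  network W -> forall (x : config V),
  exists2 y, reach (Istep W h) x y & is_equilibrium W h y.
Proof.
move=> N x; move: {2}#|[set k | x k]| (leqnn #|[set k | x k]|) => n.
elim: n x => [|n IH] x cx.
- apply: (phase2 N (leqnn _)) => k xk.
  by move: cx; rewrite leqn0 cards_eq0 => /eqP /setP /(_ k); rewrite !inE xk.
case: (boolP [exists k, x k && (mf W h k x < 0)]).
- case/existsP => k /andP [xk pk].
  have st : Istep W h x (upd x k (~~ x k)).
    apply: Istep_mk => //; rewrite xk /sgn; lra.
  have c1 : (#|[set j | upd x k (~~ x k) j]| <= n)%N.
    rewrite -ltnS; apply: leq_trans cx; apply: proper_card.
    apply/properP; split.
      apply/subsetP => j; rewrite !inE; case: (eqVneq j k) => [->|jk].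
        by rewrite xk.
      by rewrite upd_j.
    by exists k; rewrite !inE ?upd_k // xk.
  have [y r e] := IH _ c1.
  by exists y => //; apply: reach_cons st r.
- rewrite negb_exists => /forallP H; apply: (phase2 N (leqnn _)) => k xk.
  by have := H k; rewrite xk /= -leNgt.
Qed.

Lemma mf_split (V : finType) (R : realFieldType) (W : V -> V -> R) h (y : config V) k :
  mf W h k y = wS W [set j | y j] k - wS W (~: [set j | y j]) k + h k.
Proof.
rewrite /mf /wS; congr (_ + _).
rewrite (bigID (fun j => j \in [set j | y j])) /= -sumrN; congr (_ + _).
  by apply: eq_bigr => j; rewrite inE /cfg => ->; rewrite /sgn mulr1.
apply: eq_big => [j|j]; first by rewrite !inE.
by rewrite inE /cfg => /negbTE ->; rewrite /sgn mulrN1.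
Qed.

Lemma eq_const (V : finType) (R : realFieldType) (W : V -> V -> R) h (y : config V) :
  network W -> h_indecomposable W h -> is_equilibrium W h y ->
  exists b, y = allc V b.
Proof.
move=> N I /(@equilP _ _ W h _ N) E; set A := [set j | y j].
case: (eqVneq A set0) => A0.
  exists false; apply/ffunP => j; rewrite ffunE.
  by move: A0 => /setP /(_ j); rewrite !inE; case: (y j).
case: (eqVneq (~: A) set0) => C0.
  exists true; apply/ffunP => j; rewrite ffunE.
  by move: C0 => /setP /(_ j); rewrite !inE; case: (y j).
case: (I A A0 C0) => [[i iA lt]|[i iA lt]].
  have := E i; rewrite mf_split -/A; move: iA; rewrite inE => ->.
  rewrite /sgn mul1r; lra.
have := E i; rewrite mf_split -/A; move: iA; rewrite !inE => /negbTE ->.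
rewrite /sgn mulN1r; lra.
Qed.

Lemma robust (V : finType) (R : realFieldType) (W : V -> V -> R) h k :
  network W -> forall (x y : config V), reach (Istep W h) x y ->
  (forall z : config V, z k = x k -> 0 <= sgn R (x k) * mf W h k z) -> y k = x k.
Proof.
move=> N x y [p [pp <-]]; elim: p x pp => [|z p IHp] x //= /andP [st pp] H.
have [kk [ez lt]] := IstepP N st.
have zk : z k = x k.
  rewrite ez; case: (eqVneq k kk) => [ekk|nk]; last by rewrite upd_j.
  by subst kk; have := H x erefl; lra.
rewrite (IHp z pp) // => u uk; rewrite zk; apply: H; by rewrite uk.
Qed.

Lemma sgn_mf_allc (V : finType) (R : realFieldType) (W : V -> V -> R) h k a :
  sgn R a * mf W h k (allc V a) = wdeg W k + sgn R a * h k.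
Proof. by rewrite mf_allc mulrDr mulrA sgn_sq mul1r. Qed.

Lemma stable_I (V : finType) (R : realFieldType) (W : V -> V -> R) h :
  network W -> globally_stable (Istep W h) (Xstar W h).
Proof.
move=> N; split.
  by move=> x; have [y r e] := exists_eq h N x; exists y; rewrite // inE.
move=> y z yX zn r; have := yX; rewrite inE => /(@equilP _ _ W h _ N) E.
have ey : z = y.
  apply: reach_stuck r => u; apply/negP => /(IstepP N) [k [_ lt]].
  by have := E k; lra.
by move: zn; rewrite ey yX.
Qed.

Lemma stable_BR (V : finType) (R : realFieldType) (W : V -> V -> R) h :
  network W ->
  (forall y, y \in Xstar W h -> forall k, 0 < sgn R (y k) * mf W h k y) ->
  globally_stable (BRstep W h) (Xstar W h).
Proof.
move=> N P; split.
  move=> x; have [y r e] := exists_eq h N x; exists y; rewrite ?inE //.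
  by apply: reach_sub r => u v; apply: Istep_BR.
move=> y z yX zn r.
have ey : z = y.
  apply: reach_stuck r => u; apply/negP => /(BRstepP N) [k [_ lt]].
  by have := P y yX k; lra.
by move: zn; rewrite ey yX.
Qed.

Lemma sgn_mf_lo (V : finType) (R : realFieldType) (W : V -> V -> R) h k a (z : config V) :
  network W -> - wdeg W k + sgn R a * h k <= sgn R a * mf W h k z.
Proof.
move=> N; rewrite /mf mulrDr; have := @sum_bound V R W k z N.
case: a; rewrite /sgn ?mul1r ?mulN1r; move=> /andP [? ?]; lra.
Qed.

Lemma sgn_mf_hi (V : finType) (R : realFieldType) (W : V -> V -> R) h k a (z : config V) :
  network W -> sgn R a * mf W h k z <= wdeg W k + sgn R a * h k.
Proof.
move=> N; rewrite /mf mulrDr; have := @sum_bound V R W k z N.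
case: a; rewrite /sgn ?mul1r ?mulN1r; move=> /andP [? ?]; lra.
Qed.

Lemma Xpm (V : finType) (R : realFieldType) (W : V -> V -> R) h :
  network W -> h_indecomposable W h -> (forall i, `|h i| <= wdeg W i) ->
  Xstar W h = [set allc V true; allc V false].
Proof.
move=> N I H; apply/setP => x; rewrite !inE; apply/idP/idP.
  by move/(eq_const N I) => [[|] ->]; rewrite eqxx ?orbT.
have eqa : forall a, is_equilibrium W h (allc V a).
  move=> a; apply/(@equilP _ _ W h _ N) => k; rewrite ffunE sgn_mf_allc.
  have := H k; rewrite ler_norml => /andP [? ?].
  by case: a; rewrite /sgn ?mul1r ?mulN1r; lra.
by case/orP => /eqP ->.
Qed.

Theorem corollary1 (V : finType) (R : realFieldType)
    (W : V -> V -> R) (h : V -> R) :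
  network W -> h_indecomposable W h ->
  [/\ (forall i, `|h i| <= wdeg W i) ->
        Xstar W h = [set allc V true; allc V false] /\
        globally_stable (Istep W h) (Xstar W h),
      (forall i, `|h i| < wdeg W i) ->
        Xstar W h = [set allc V true; allc V false] /\
        globally_stable (BRstep W h) (Xstar W h)
    & forall a : bool, (exists i, wdeg W i < sgn R a * h i) ->
        Xstar W h = [set allc V a] /\
        globally_stable (BRstep W h) (Xstar W h)].
Proof.
move=> N I; split.
- by move=> H; split; [exact: Xpm | exact: stable_I].
- move=> H; have H' : forall i, `|h i| <= wdeg W i by move=> i; exact: ltW.
  have E := Xpm N I H'; split => //; apply: stable_BR => // y.
  rewrite E !inE => /orP [] /eqP -> k; rewrite ffunE sgn_mf_allc;
  have := H k; rewrite ltr_norml => /andP [? ?]; rewrite /sgn ?mul1r ?mulN1r; lra.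
move=> a [i lt].
have pos : forall k, 0 < wdeg W k + sgn R a * h k.
  move=> k; rewrite ltNge; apply/negP => le.
  have w0 := wdeg_ge0 i N.
  case: (eqVneq i k) => [ik|ik]; first by subst k; lra.
  set x := upd (allc V a) k (~~ a).
  have [y r e] := exists_eq h N x.
  have xi : x i = a by rewrite /x upd_j // ffunE.
  have yi : y i = x i.
    apply: (robust N r) => z _; rewrite xi.
    have := @sgn_mf_lo V R W h i a z N; lra.
  have yk : y k = x k.
    apply: (robust N r) => z _; rewrite /x upd_k sgn_neg mulNr.
    have := @sgn_mf_hi V R W h k a z N; lra.
  have [b eb] := eq_const N I e.
  move: yi yk; rewrite xi /x upd_k eb !ffunE => -> /eqP.
  by case: (a).
have eqa : is_equilibrium W h (allc V a).
  apply/(@equilP _ _ W h _ N) => k; rewrite ffunE sgn_mf_allc.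
  exact: ltW.
have E : Xstar W h = [set allc V a].
  apply/setP => x; rewrite !inE; apply/idP/idP; last by move=> /eqP ->.
  move=> ex; have [b eb] := eq_const N I ex.
  case: (eqVneq b a) => [<-|ba]; first by rewrite eb.
  move: ex; rewrite eb => /(@equilP _ _ W h _ N) /(_ i).
  rewrite ffunE; have -> : b = ~~ a by move: ba; case: (a); case: (b).
  rewrite sgn_neg mulNr; have := @sgn_mf_lo V R W h i a (allc V (~~ a)) N; lra.
split => //; apply: stable_BR => // y; rewrite E inE => /eqP -> k.
by rewrite ffunE sgn_mf_allc.
Qed.
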